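(* Let $N=r+1$ and let $M_n:=M_{1,n}$ and $M_{\alpha,n}$ ($\alpha\in[1,N]$, $n\in\mathbb Z$) be the difference operators $$M_{\alpha,n}=\sum_{I\subset[1,N],\,|I|=\alpha}x_I^{\,n}\prod_{i\in I,\ j\notin I}\frac{x_i}{x_i-x_j}\,\Gamma_I,$$ with $x_I=\prod_{i\in I}x_i$, $\Gamma_I=\prod_{i\in I}\Gamma_i$, $(\Gamma_if)(x)=f(\dots,qx_i,\dots)$. Let $m(u)=\sum_{n\in\mathbb{Z}}u^nM_n$. Then for every $\alpha\in[1,N]$ and $n\in\mathbb{Z}$, $M_{\alpha,n}$ equals the coefficient of $(u_1u_2\cdots u_\alpha)^n$ in the formal series $$\prod_{1\le i<j\le\alpha}\Big(1-q\frac{u_j}{u_i}\Big)\,m(u_1)m(u_2)\cdots m(u_\alpha),$$ i.e. $\sum_{\alpha\text{-}\mathrm{currents}}\,$: $M_{\alpha,n}=\sum_{S}c_S\,M_{n+s_1}\cdots M_{n+s_\alpha}$ where $\prod_{i<j}(1-qu_j/u_i)=\sum_S c_S\prod_i u_i^{-s_i}$. Equivalently, with $m_\alpha(z)=\sum_nz^nM_{\alpha,n}$, $m_\alpha$ is obtained from this series by extracting the coefficients of $(u_1\cdots u_\alpha)^n$.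
   Context: The operators act on symmetric functions in $x_1,\dots,x_N$. The product $\prod_{i<j}(1-qu_j/u_i)$ is a Laurent polynomial, so each coefficient extraction is a finite sum of ordered products of the operators $M_n$. *)

(* Defs.v *)
From HB Require Import structures.
From mathcomp Require Import all_boot all_order all_fingroup all_algebra.
Set Implicit Arguments. Unset Strict Implicit. Unset Printing Implicit Defensive.
Import Order.TTheory GRing.Theory Num.Theory.
Local Open Scope ring_scope.

Section Ops.
Variables (F : fieldType) (N : nat) (q : F).

Definition shift (I : {set 'I_N}) (x : 'I_N -> F) : 'I_N -> F :=
  fun k => if k \in I then q * x k else x k.

Definition Mop (a : nat) (n : int) (f : ('I_N -> F) -> F) : ('I_N -> F) -> F :=
  fun x => \sum_(I : {set 'I_N} | #|I| == a)
     (\prod_(i in I) x i) ^ n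
     * (\prod_(i in I) \prod_(j in ~: I) (x i / (x i - x j)))
     * f (shift I x).

Definition Mprod (l : seq int) (f : ('I_N -> F) -> F) : ('I_N -> F) -> F :=
  foldr (fun k g => Mop 1 k g) f l.

(* Expansion of prod_{i<j} (1 - q u_j/u_i): choosing the term -q u_j/u_i exactly
   for the pairs (i,j) in P gives (-q)^|P| prod_k u_k^{-s_k(P)} with
   s_k(P) = #{j | (k,j) in P} - #{i | (i,k) in P}. *)
Definition spair (a : nat) (P : {set 'I_a * 'I_a}) (k : 'I_a) : int :=
  (#|[set j | (k, j) \in P]|)%:Z - (#|[set i | (i, k) \in P]|)%:Z.

(* coefficient of (u_1...u_a)^n in prod_{i<j}(1 - q u_j/u_i) m(u_1)...m(u_a), applied to f at x *)
Definition current_sum (a : nat) (n : int) (f : ('I_N -> F) -> F) (x : 'I_N -> F) : F :=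
  \sum_(P : {set 'I_a * 'I_a} | P \subset [set p : 'I_a * 'I_a | (val p.1 < val p.2)%N])
     (- q) ^+ #|P| * Mprod [seq n + spair P k | k <- enum 'I_a] f x.

End Ops.

(* Main.v *)
Require Import Defs.
From HB Require Import structures.
From mathcomp Require Import all_boot all_order all_fingroup all_algebra.
From Stdlib Require Import FunctionalExtensionality.
Set Implicit Arguments. Unset Strict Implicit. Unset Printing Implicit Defensive.
Import Order.TTheory GRing.Theory Num.Theory.
Local Open Scope ring_scope.
From mathcomp Require Import ring.

Section Main.
Variables (F : fieldType) (N : nat) (q : F) (d : 'I_N) (n : int)
  (f : ('I_N -> F) -> F).

Definition sh (i : 'I_N) (y : 'I_N -> F) := shift q [set i] y.
Definition pt (x : 'I_N -> F) (t : seq 'I_N) := foldl (fun y i => sh i y) x t.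
Definition c1 (x : 'I_N -> F) i := \prod_(j in ~: [set i]) (x i / (x i - x j)).
Fixpoint allseq m : seq (seq 'I_N) :=
  if m is m'.+1 then [seq i :: s | i <- enum 'I_N, s <- allseq m'] else [:: [::]].
Fixpoint Ypow (x : 'I_N -> F) (l : seq int) (s : seq 'I_N) : F :=
  match l, s with e :: l', i :: s' => x i ^ e * Ypow (sh i x) l' s' | _, _ => 1 end.
Fixpoint C (x : 'I_N -> F) (s : seq 'I_N) : F :=
  match s with i :: s' => c1 x i * C (sh i x) s' | [::] => f x end.

Lemma Mop1E (g : ('I_N -> F) -> F) x k :
  Mop q 1 k g x = \sum_i x i ^ k * c1 x i * g (sh i x).
Proof.
rewrite /Mop (reindex_omap set1 unset1) => [|A /cards1P[i ->] /[!set1K]//].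
apply: congr_big => // [i|i _]; first by rewrite set1K cards1 !eqxx.
by rewrite big_set1 /c1 big_set1.
Qed.

Lemma MprodE l x : Mprod q l f x = \sum_(s <- allseq (size l)) Ypow x l s * C x s.
Proof.
elim: l x => [|k l IH] x /=; first by rewrite big_seq1 mul1r.
rewrite Mop1E big_allpairs_dep big_enum /=; apply: eq_bigr => i _.
rewrite IH mulr_sumr; apply: eq_bigr => s _ /=.
by rewrite !mulrA [_ * c1 x i]mulrC !mulrA [c1 x i * _]mulrC.
Qed.

Lemma size_allseq m s : s \in allseq m -> size s = m.
Proof.
elim: m s => [|m IH] s /=; first by rewrite inE => /eqP->.
by case/allpairsP => -[i t] /= [_ /IH <- ->].
Qed.

Definition Y x s (k : nat) := pt x (take k s) (nth d s k).

Lemma Ypow_prod l s x : size l = size s ->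
  Ypow x l s = \prod_(k < size s) Y x s k ^ (nth 0 l k).
Proof.
elim: s l x => [|i s IH] [|e l] x //=; first by rewrite big_ord0.
by case => /IH ->; rewrite big_ord_recl.
Qed.


Lemma pt_val x t j : pt x t j = q ^+ count_mem j t * x j.
Proof.
elim: t x => [|i t IH] x /=; first by rewrite mul1r.
rewrite /pt /= -/(pt _ t) IH /sh /shift in_set1 eq_sym.
by case: eqVneq => _ /=; rewrite ?exprS ?add0n // -mulrA mulrCA mulrA.
Qed.

End Main.


Lemma sum_subset (F : fieldType) (T : finType) (A : {set T}) (g : T -> F) :
  \sum_(P : {set T} | P \subset A) \prod_(p in P) g p = \prod_(p in A) (1 + g p).
Proof.
have H := @bigA_distr F 0 1 *%R +%R T (fun p => if p \in A then g p else 0) (fun _ => 1).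
symmetry; rewrite big_mkcond /=.
transitivity (\prod_i ((if i \in A then g i else 0) + 1)).
  by apply: eq_bigr => i _; case: ifP => _; [rewrite addrC | rewrite add0r].
rewrite H [RHS]big_mkcond /=; apply: eq_bigr => J _.
case: ifP => [/subsetP sJA | /negbT /subsetPn [i iJ iA]].
  rewrite [RHS]big_mkcond; apply: eq_bigr => i _.
  by case: ifP => // /sJA ->.
by rewrite (bigD1 i) //= iJ (negbTE iA) mul0r.
Qed.

Section Pairs.
Variables (F : fieldType) (q : F) (n : int).

Lemma prod_spair a (y : 'I_a -> F) (P : {set 'I_a * 'I_a}) :
  (forall k, y k != 0) ->
  \prod_(k < a) y k ^ (n + spair P k) =
  (\prod_(k < a) y k ^ n) * \prod_(p in P) (y p.1 / y p.2).
Proof.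
move=> y0.
have E : forall k, y k ^ (n + spair P k) =
   y k ^ n * (\prod_(j | (k, j) \in P) y k / \prod_(i | (i, k) \in P) y k).
  move=> k; have uk : y k \is a GRing.unit by rewrite unitfE.
  rewrite /spair exprzDr // exprzDr // -exprnN !prodr_const.
  congr (_ * (_ / _)); [congr (_ ^ Posz _) | congr (_ ^+ _)];
    by apply: eq_card => j; rewrite inE.
rewrite (eq_bigr _ (fun k _ => E k)) big_split /= prodf_div; congr (_ * _).
rewrite prodf_div; congr (_ / _).
  rewrite pair_big_dep /=; apply: eq_bigl => -[i j] //.
rewrite (exchange_big_dep xpredT) //= pair_big_dep /=; apply: eq_bigl => -[i j] //.
Qed.

Lemma pairsum a (y : 'I_a -> F) : (forall k, y k != 0) ->
  \sum_(P : {set 'I_a * 'I_a} | P \subset [set p : 'I_a * 'I_a | (val p.1 < val p.2)%N])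
     (- q) ^+ #|P| * \prod_(k < a) y k ^ (n + spair P k)
  = (\prod_(k < a) y k ^ n) *
    \prod_(i < a) \prod_(j < a | (i < j)%N) (1 - q * y i / y j).
Proof.
move=> y0.
transitivity (\sum_(P : {set 'I_a * 'I_a} | P \subset [set p : 'I_a * 'I_a | (val p.1 < val p.2)%N])
   (\prod_(k < a) y k ^ n) * \prod_(p in P) (- q * (y p.1 / y p.2))).
  apply: eq_bigr => P _; rewrite prod_spair // [in RHS]big_split /= prodr_const.
  by rewrite mulrCA.
rewrite -mulr_sumr sum_subset; congr (_ * _).
rewrite pair_big_dep /=; apply: congr_big => [//|[i j]|[i j] _] /=.
  by rewrite inE.
by rewrite mulNr mulrA.
Qed.

End Pairs.

Section Cur.
Variables (F : fieldType) (N : nat) (q : F) (d : 'I_N) (n : int)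
  (f : ('I_N -> F) -> F).
Hypothesis hq : q != 0.

Definition T x s := (\prod_(k < size s) Y q d x s k ^ n) *
  (\prod_(i < size s) \prod_(j < size s | (i < j)%N) (1 - q * Y q d x s i / Y q d x s j))
  * C q f x s.

Lemma Y_neq0 x s k : (forall i, x i != 0) -> Y q d x s k != 0.
Proof. by move=> hx; rewrite /Y pt_val mulf_neq0 ?expf_neq0. Qed.

Lemma curE a x : (forall i, x i != 0) ->
  current_sum q a n f x = \sum_(s <- allseq N a) T x s.
Proof.
move=> hx; rewrite /current_sum.
under eq_bigr => P _ do rewrite MprodE size_map size_enum_ord big_distrr /=.
rewrite exchange_big /=; rewrite big_seq [RHS]big_seq; apply: eq_bigr => s.
move/size_allseq => Hs.
transitivity (\sum_(P : {set 'I_a * 'I_a} | P \subset [set p : 'I_a * 'I_a | (val p.1 < val p.2)%N])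
     (- q) ^+ #|P| * \prod_(k < a) Y q d x s k ^ (n + spair P k) * C q f x s).
  apply: eq_bigr => P _; rewrite mulrA (Ypow_prod q d); last first.
    by rewrite size_map size_enum_ord Hs.
  congr (_ * _ * _); rewrite Hs; apply: eq_bigr => k _.
  by rewrite (nth_map k) ?size_enum_ord // nth_ord_enum.
rewrite -big_distrl /= pairsum; last by move=> k; apply: Y_neq0.
by rewrite /T Hs.
Qed.
End Cur.

Lemma prod_recl_cond (F : fieldType) m (P : nat -> bool) (G : nat -> F) :
  \prod_(j < m.+1 | P j) G j = (if P 0%N then G 0%N else 1) * \prod_(j < m | P j.+1) G j.+1.
Proof.
rewrite big_mkcond big_ord_recl /= [in RHS]big_mkcond; congr (_ * _).
Qed.

Lemma count_index (N : nat) (i : 'I_N) s : count_mem i (take (index i s) s) = 0%N.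
Proof. elim: s => //= y s IH; case: ifP => //= /negbT H; by rewrite IH addn0 (negbTE H). Qed.

Lemma pairs_recl (F : fieldType) m (G : nat -> nat -> F) :
  \prod_(i < m.+1) \prod_(j < m.+1 | (i < j)%N) G i j =
  (\prod_(j < m) G 0%N j.+1) * \prod_(i < m) \prod_(j < m | (i < j)%N) G i.+1 j.+1.
Proof.
rewrite big_ord_recl prod_recl_cond /= mul1r; congr (_ * _).
by apply: eq_bigr => i _; rewrite prod_recl_cond /= mul1r.
Qed.

Section Rec.
Variables (F : fieldType) (N : nat) (q : F) (d : 'I_N) (n : int)
  (f : ('I_N -> F) -> F).
Hypothesis hq : q != 0.

Lemma T_cons x i s : T q d n f x (i :: s) = x i ^ n * c1 x i *
  (\prod_(j < size s) (1 - q * x i / Y q d (sh q i x) s j)) * T q d n f (sh q i x) s.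
Proof.
rewrite /T /= big_ord_recl.
rewrite (pairs_recl _ (fun a b => 1 - q * Y q d x (i :: s) a / Y q d x (i :: s) b)).
have -> : \prod_(i0 < size s) Y q d x (i :: s) (lift ord0 i0) ^ n =
   \prod_(k < size s) Y q d (sh q i x) s k ^ n.
  by apply: eq_bigr => k _; rewrite lift0.
have -> : \prod_(j < size s) (1 - q * Y q d x (i :: s) 0%N / Y q d x (i :: s) j.+1) =
   \prod_(j < size s) (1 - q * x i / Y q d (sh q i x) s j) by [].
have -> : \prod_(i0 < size s) \prod_(j < size s | (i0 < j)%N)
      (1 - q * Y q d x (i :: s) i0.+1 / Y q d x (i :: s) j.+1) =
   \prod_(i0 < size s) \prod_(j < size s | (i0 < j)%N)
      (1 - q * Y q d (sh q i x) s i0 / Y q d (sh q i x) s j) by [].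
have -> : Y q d x (i :: s) ord0 = x i by [].
ring.
Qed.

Lemma shift_neq0 (B : {set 'I_N}) (x : 'I_N -> F) : (forall j, x j != 0) -> forall j, shift q B x j != 0.
Proof. by move=> hx j; rewrite /shift; case: ifP => _; rewrite ?mulf_neq0. Qed.

Lemma T_nonuniq s x : (forall j, x j != 0) -> ~~ uniq s -> T q d n f x s = 0.
Proof.
elim: s x => [|i s IH] x hx //=; rewrite negb_and negbK T_cons.
case/orP => [iS | nu]; last first.
  by rewrite IH ?mulr0 //; apply: shift_neq0.
have jl : (index i s < size s)%N by rewrite index_mem.
rewrite (bigD1 (Ordinal jl)) //=.
have -> : Y q d (sh q i x) s (index i s) = q * x i.
  by rewrite /Y pt_val nth_index // count_index expr0 mul1r /sh /shift in_set1 eqxx.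
by rewrite divff ?mulf_neq0 // subrr !mul0r mulr0 mul0r.
Qed.

Lemma sh_shift (B : {set 'I_N}) x i : i \notin B -> sh q i (shift q B x) = shift q (i |: B) x.
Proof.
move=> iB; apply: functional_extensionality => j; rewrite /sh /shift !inE.
by case: eqVneq => [->|] //=; rewrite (negbTE iB).
Qed.

Lemma Y_uniq (B : {set 'I_N}) x s k : uniq s -> (forall j, j \in s -> j \notin B) ->
  (k < size s)%N -> Y q d (shift q B x) s k = x (nth d s k).
Proof.
move=> us sB hk; rewrite /Y pt_val.
have := count_index (nth d s k) s; rewrite index_uniq // => ->.
by rewrite expr0 mul1r /shift (negbTE (sB _ (mem_nth d hk))).
Qed.

Lemma prod_nth (G : 'I_N -> F) s : \prod_(j < size s) G (nth d s j) = \prod_(j <- s) G j.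
Proof. by rewrite (big_nth d) big_mkord. Qed.

Lemma c1_split (B : {set 'I_N}) s x i : i \notin B -> i \notin s -> uniq s ->
  (forall j, j \in s -> j \notin B) ->
  c1 (shift q B x) i = (\prod_(j in B) (x i / (x i - q * x j))) *
    (\prod_(j <- s) (x i / (x i - x j))) *
    \prod_(j | (j \notin B) && (j \notin i :: s)) (x i / (x i - x j)).
Proof.
move=> iB iS us sB; rewrite /c1 {1 2}/shift (negbTE iB).
rewrite (bigID (mem B)) /= -mulrA; congr (_ * _).
  apply: eq_big => j; first by rewrite !inE; case: eqVneq => // ->; rewrite (negbTE iB).
  by move=> /andP[_ jB]; rewrite /shift jB.
rewrite (bigID (mem s)) /= big_uniq //; congr (_ * _).
  apply: eq_big => j; last by move=> /andP[/andP[_ jB] _]; rewrite /shift (negbTE jB).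
  rewrite !inE; case jS: (j \in s); rewrite ?andbF // (sB _ jS) andbT.
  rewrite andbT; apply/eqP => ji; move: iS; by rewrite -ji jS.
apply: eq_big => j; last by move=> /andP[/andP[_ jB] _]; rewrite /shift (negbTE jB).
by rewrite !inE; case: (j == i); case: (j \in B); case: (j \in s).
Qed.

Fixpoint Phi (x : 'I_N -> F) s : F :=
  match s with i :: s' => (\prod_(j <- s') (x i / (x i - x j))) * Phi x s' | [::] => 1 end.

Lemma cancel_prod (x : 'I_N -> F) (i : 'I_N) (s : seq 'I_N) : (forall j, x j != 0) -> (forall i j : 'I_N, i != j -> x i != q * x j) ->
  i \notin s ->
  (\prod_(k <- s) (x k / (x k - q * x i))) * \prod_(j <- s) (1 - q * x i / x j) = 1.
Proof.
move=> hx hxq iS; rewrite -big_split /=; rewrite big_seq; apply: big1 => k kS.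
have ki : k != i by apply/eqP => ki; move: iS; rewrite -ki kS.
have h1 := hxq _ _ ki; have h2 := hx k.
have h3 : x k - q * x i != 0 by rewrite subr_eq0.
field; rewrite h2 h3 //.
Qed.

Lemma T_uniq (s : seq 'I_N) : forall (B : {set 'I_N}) (x : 'I_N -> F), (forall j, x j != 0) ->
  (forall i j : 'I_N, i != j -> x i != q * x j) -> uniq s -> (forall j, j \in s -> j \notin B) ->
  T q d n f (shift q B x) s = (\prod_(j <- s) x j ^ n) *
    (\prod_(k <- s) \prod_(j in B) (x k / (x k - q * x j))) *
    (\prod_(k <- s) \prod_(j | (j \notin B) && (j \notin s)) (x k / (x k - x j))) *
    Phi x s * f (shift q (B :|: [set j in s]) x).
Proof.
elim: s => [|i s IH] B x hx hxq.
  move=> _ _; rewrite /T /= !big_ord0 !big_nil.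
  have -> : [set j in [::]] = set0 :> {set 'I_N} by apply/setP => j; rewrite !inE.
  by rewrite setU0 !mul1r.
move=> /= /andP[iS us] sB.
have iB : i \notin B by apply: sB; rewrite inE eqxx.
have sB' : forall j, j \in s -> j \notin B by move=> j js; apply: sB; rewrite inE js orbT.
have xi : shift q B x i = x i by rewrite /shift (negbTE iB).
rewrite T_cons sh_shift // IH //; last first.
  move=> j js; rewrite !inE negb_or sB' // andbT.
  by apply/eqP => ji; move: iS; rewrite -ji js.
rewrite xi (c1_split x iB iS us sB').
have -> : \prod_(j < size s) (1 - q * x i / Y q d (shift q (i |: B) x) s j) =
    \prod_(j <- s) (1 - q * x i / x j).
  rewrite -prod_nth; apply: eq_bigr => j _; rewrite Y_uniq //.
  move=> k ks; rewrite !inE negb_or sB' // andbT.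
  by apply/eqP => ki; move: iS; rewrite -ki ks.
have -> : \prod_(k <- s) \prod_(j in i |: B) (x k / (x k - q * x j)) =
   (\prod_(k <- s) (x k / (x k - q * x i))) * \prod_(k <- s) \prod_(j in B) (x k / (x k - q * x j)).
  by rewrite -big_split /=; apply: eq_bigr => k _; rewrite big_setU1.
have -> : \prod_(k <- s) \prod_(j | (j \notin i |: B) && (j \notin s)) (x k / (x k - x j)) =
   \prod_(k <- s) \prod_(j | (j \notin B) && (j \notin i :: s)) (x k / (x k - x j)).
  apply: eq_bigr => k _; apply: eq_bigl => j.
  by rewrite !inE negb_or; case: (j == i); case: (j \in B).
have -> : (i |: B) :|: [set j in s] = B :|: [set j in i :: s].
  by apply/setP => j; rewrite !inE; case: (j == i); case: (j \in B).
rewrite !big_cons /=.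
have := cancel_prod hx hxq iS.
set P1 := \prod_(k <- s) (x k / (x k - q * x i)).
set P2 := \prod_(j <- s) (1 - q * x i / x j).
move=> HC.
transitivity (P1 * P2 * (x i ^ n * \prod_(j in B) (x i / (x i - q * x j)) *
    \prod_(j <- s) (x i / (x i - x j)) *
    \prod_(j | (j \notin B) && (j \notin i :: s)) (x i / (x i - x j)) *
    (\prod_(j <- s) x j ^ n * \prod_(k <- s) \prod_(j in B) (x k / (x k - q * x j)) *
     \prod_(k <- s) \prod_(j | (j \notin B) && (j \notin i :: s)) (x k / (x k - x j)) *
     Phi x s * f (shift q (B :|: [set j in i :: s]) x)))).
  ring.
rewrite HC mul1r; ring.
Qed.
End Rec.

Lemma lagrange (F : fieldType) (N : nat) (I : {set 'I_N}) (t : 'I_N -> F) :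
  (forall i j, i != j -> t i != t j) -> I != set0 ->
  \sum_(i in I) \prod_(j in I :\ i) (t j / (t j - t i)) = 1.
Proof.
move=> ht I0.
have dne : forall i j, i != j -> t i - t j != 0 by move=> i j ij; rewrite subr_eq0 ht.
pose c i := (\prod_(j in I :\ i) (t i - t j))^-1.
pose p : {poly F} := \sum_(i in I) c i *: \prod_(j in I :\ i) ('X - (t j)%:P) - 1.
have m0 : (0 < #|I|)%N by rewrite card_gt0.
have p0 : p = 0.
  apply: (@roots_geq_poly_eq0 _ p [seq t k | k <- enum I]).
  - apply/allP => _ /mapP[k kI ->]; rewrite mem_enum in kI.
    rewrite /root /p hornerD hornerN hornerC horner_sum (bigD1 k) //=.
    have -> : \sum_(i in I | i != k) (c i *: \prod_(j in I :\ i) ('X - (t j)%:P)).[t k] = 0.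
      apply: big1 => i /andP[iI ik]; rewrite hornerZ horner_prod (bigD1 k) /=; last first.
        by rewrite !inE eq_sym ik.
      by rewrite hornerXsubC subrr mul0r mulr0.
    rewrite addr0 hornerZ horner_prod.
    under eq_bigr => j _ do rewrite hornerXsubC.
    rewrite mulVf ?subrr //; apply/prodf_neq0 => j; rewrite !inE => /andP[jk _].
    by apply: dne; rewrite eq_sym.
  - rewrite map_inj_in_uniq ?enum_uniq // => i j _ _ /eqP; apply: contraTeq => ij.
    exact: ht.
  - rewrite size_map -cardE /p.
    apply: leq_trans (size_polyD _ _) _; rewrite size_polyN size_poly1 geq_max m0 andbT.
    apply: (big_ind (fun r : {poly F} => size r <= #|I|)%N) => //.
      by rewrite size_poly0.
      by move=> r1 r2 h1 h2; apply: leq_trans (size_polyD _ _) _; rewrite geq_max h1.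
    move=> i iI; apply: leq_trans (size_scale_leq _ _) _.
    rewrite -big_enum size_prod_XsubC -cardE (cardsD1 i I) iI.
    by rewrite add1n.
have := congr1 (fun r : {poly F} => r.[0]) p0.
rewrite /p hornerD hornerN hornerC horner0 horner_sum => /eqP; rewrite subr_eq0 => /eqP H.
rewrite -[in RHS]H.
apply: eq_bigr => i iI; rewrite hornerZ horner_prod /c.
rewrite [X in _ = _ * X](eq_bigr (fun j => 0 - t j)); last by move=> j _; rewrite hornerXsubC.
rewrite mulrC -prodf_div; apply: eq_bigr => j; rewrite !inE => /andP[ji _].
have h1 := dne _ _ ji; have h2 : t i - t j != 0 by apply: dne; rewrite eq_sym.
by field; rewrite h1 h2.
Qed.

Section Fin.
Variables (F : fieldType) (N : nat) (q : F) (d : 'I_N).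

Lemma allseqS m : allseq N m.+1 = [seq i :: s | i <- enum 'I_N, s <- allseq N m].
Proof. by []. Qed.

Lemma cond_cons (I : {set 'I_N}) i (s : seq 'I_N) : i \in I ->
  (uniq (i :: s) && ([set j in i :: s] == I)) = (uniq s && ([set j in s] == I :\ i)).
Proof.
move=> iI /=; case iS: (i \in s) => /=.
  case: eqP; rewrite ?andbF // => E.
  have : i \in [set j in s] by rewrite inE.
  by rewrite E !inE eqxx.
congr (_ && _); apply/eqP/eqP => /setP E; apply/setP => j.
  by move: (E j); rewrite !inE; case: eqVneq => [->|] //=; rewrite iS.
move: (E j); rewrite !inE; case: eqVneq => [->|] //= _ ->; by rewrite ?iI.
Qed.

Lemma phisum (x : 'I_N -> F) : (forall j, x j != 0) -> (forall i j, i != j -> x i != x j) ->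
  forall a (I : {set 'I_N}), #|I| = a ->
  \sum_(s <- allseq N a | uniq s && ([set j in s] == I)) Phi x s = 1.
Proof.
move=> hx hxx; elim => [|a IH] I hI.
  move/cards0_eq: hI => ->; rewrite big_cons big_nil /= addr0.
  have -> : [set j in [::]] = set0 :> {set 'I_N} by apply/setP => j; rewrite !inE.
  by rewrite eqxx.
rewrite big_mkcond allseqS big_allpairs_dep big_enum /=.
under eq_bigr => i _ do rewrite -big_mkcond.
rewrite (bigID (mem I)) /=.
rewrite [X in _ + X]big1 ?addr0; last first.
  move=> i iI; apply: big1 => s /andP[_ /eqP E].
  by move: iI; rewrite -E inE mem_head.
transitivity (\sum_(i in I) \prod_(j in I :\ i) (x i / (x i - x j))); last first.
  rewrite -[RHS](@lagrange F N I (fun i => (x i)^-1)); last 2 first.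
  - by move=> i j ij; rewrite (inj_eq (@invr_inj _)) hxx.
  - by rewrite -card_gt0 hI.
  apply: eq_bigr => i iI; apply: eq_bigr => j; rewrite !inE => /andP[ji _].
  have h1 := hxx _ _ ji; have h2 := hx i; have h3 := hx j.
  have h4 : x i - x j != 0 by rewrite subr_eq0 eq_sym.
  by field; rewrite mulN1r h2 h3 h4.
apply: eq_bigr => i iI.
rewrite (eq_bigl (fun s => uniq s && ([set j in s] == I :\ i))); last first.
  by move=> s; rewrite -cond_cons.
rewrite -[RHS]mulr1 -(IH (I :\ i)); last first.
  by move: hI; rewrite (cardsD1 i) iI add1n => -[].
rewrite mulr_sumr; apply: eq_bigr => s /andP[us /eqP E] /=; congr (_ * _).
rewrite big_uniq //; apply: eq_bigl => j; by rewrite -E inE.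
Qed.
End Fin.

Lemma prodXz (F : fieldType) (I : finType) (P : pred I) (G : I -> F) (n : int) :
  \prod_(i | P i) G i ^ n = (\prod_(i | P i) G i) ^ n.
Proof. case: n => m /=; first exact: prodrXl. by rewrite prodfV prodrXl. Qed.

Lemma T_K (F : fieldType) (N : nat) (q : F) (d : 'I_N) (n : int) f (x : 'I_N -> F) s :
  q != 0 -> (forall j, x j != 0) -> (forall i j : 'I_N, i != j -> x i != q * x j) -> uniq s ->
  T q d n f x s = (\prod_(i in [set j in s]) x i) ^ n *
     (\prod_(i in [set j in s]) \prod_(j in ~: [set j in s]) (x i / (x i - x j))) *
     f (shift q [set j in s] x) * Phi x s.
Proof.
move=> hq hx hxq us.
have sx : shift q set0 x = x by apply: functional_extensionality => j; rewrite /shift inE.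
rewrite -[in LHS]sx (T_uniq d n f) //; last by move=> j _; rewrite inE.
have E : forall G : 'I_N -> F, \prod_(k <- s) G k = \prod_(k in [set j in s]) G k.
  by move=> G; rewrite big_uniq //; apply: eq_bigl => j; rewrite inE.
rewrite !E set0U -prodXz.
have -> : \prod_(k in [set j in s]) \prod_(j in set0) (x k / (x k - q * x j)) = 1.
  by apply: big1 => k _; rewrite big_set0.
have -> : \prod_(k in [set j in s]) \prod_(j | (j \notin set0) && (j \notin s)) (x k / (x k - x j)) =
   \prod_(k in [set j in s]) \prod_(j in ~: [set j in s]) (x k / (x k - x j)).
  by apply: eq_bigr => k _; apply: eq_bigl => j; rewrite !inE.
ring.
Qed.

Unset Implicit Arguments.

Theorem theorem4p5 (F : fieldType) (N : nat) (q : F)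
  (f : ('I_N -> F) -> F)
  (f_sym : forall (s : 'S_N) (x : 'I_N -> F), f (fun k => x (s k)) = f x)
  (alpha : nat) (halpha : (1 <= alpha <= N)%N) (n : int)
  (x : 'I_N -> F) (hq : q != 0) (hx0 : forall i, x i != 0)
  (hgen : forall i j : 'I_N, i != j -> forall a b : nat, (a <= N)%N -> (b <= N)%N ->
            q ^+ a * x i != q ^+ b * x j) :
  Mop q alpha n f x = current_sum q alpha n f x.
Proof.
have N0 : (0 < N)%N by case/andP: halpha => h1 h2; exact: leq_trans h1 h2.
pose d : 'I_N := Ordinal N0.
have hxq : forall i j : 'I_N, i != j -> x i != q * x j.
  by move=> i j ij; have := hgen i j ij 0%N 1%N (leq0n N) N0; rewrite expr0 mul1r expr1.
have hxx : forall i j : 'I_N, i != j -> x i != x j.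
  by move=> i j ij; have := hgen i j ij 0%N 0%N (leq0n N) (leq0n N); rewrite expr0 !mul1r.
rewrite (curE d n f hq alpha hx0).
rewrite (bigID uniq) /= [X in _ + X]big1 ?addr0; last first.
  by move=> s nu; apply: T_nonuniq.
rewrite big_seq_cond.
under eq_bigr => s /andP[sA us] do rewrite (T_K d n f hq hx0 hxq us).
transitivity (\sum_(I : {set 'I_N} | #|I| == alpha)
   (\prod_(i in I) x i) ^ n * (\prod_(i in I) \prod_(j in ~: I) (x i / (x i - x j))) *
   f (shift q I x) *
   \sum_(s <- allseq N alpha | (s \in allseq N alpha) && uniq s && ([set j in s] == I)) Phi x s).
  apply: eq_bigr => I /eqP hI.
  rewrite (eq_bigl (fun s => (s \in allseq N alpha) && (uniq s && ([set j in s] == I)))); last by move=> s; rewrite andbA.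
  by rewrite -big_seq_cond (phisum hx0 hxx hI) mulr1.
under [LHS]eq_bigr => I _ do rewrite mulr_sumr.
rewrite (exchange_big_dep (fun s => (s \in allseq N alpha) && uniq s)) /=; last first.
  by move=> I s _ /andP[].
apply: eq_bigr => s /andP[sA us].
rewrite (big_pred1 [set j in s]) // => I /=; rewrite sA us /=.
apply/idP/idP => [/andP[_ /eqP <-] // | /eqP ->]; rewrite eqxx andbT.
by rewrite cardsE; move/card_uniqP: us => ->; rewrite (size_allseq sA).
Qed.
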